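(* Let $u\in\mathrm{BMO}(\mathbb R)$ be complex-valued and let $\varphi:\mathbb R\to\mathbb C$ satisfy $|\varphi(x)|\le Ce^{-|x|}$ for some $C>0$. If $\|u\|_*<C_{JN}$, then there is a constant $C(u)$, given in terms of $\|u\|_*$ (and $C$), such that for all $x\in\mathbb R$, $y>0$, $$\int_{\mathbb R}|\varphi_y(x-t)|\,e^{|u(t)-u_{I(x,y)}|}\,dt\le C(u).$$
   Context: $u_I=|I|^{-1}\int_Iu$, $\|u\|_*=\sup_I|I|^{-1}\int_I|u-u_I|$ over bounded intervals, $\mathrm{BMO}(\mathbb R)=\{\|u\|_*<\infty\}$. $C_0,C_{JN}>0$ are universal constants with $|I|^{-1}|\{t\in I:|u(t)-u_I|\ge\lambda\}|\le C_0\exp(-C_{JN}\lambda/\|u\|_* )$ for all $u\in\mathrm{BMO}$, bounded $I$, $\lambda>0$. $\varphi_y(x)=y^{-1}\varphi(x/y)$, $I(x,y)=(x-y,x+y)$. *)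

(* Defs.v *)
From HB Require Import structures.
From mathcomp Require Import all_boot all_order all_algebra.
From mathcomp Require Import all_classical all_reals all_analysis.
Set Implicit Arguments. Unset Strict Implicit. Unset Printing Implicit Defensive.
Import Order.TTheory GRing.Theory Num.Theory.
Import numFieldNormedType.Exports.
Local Open Scope classical_set_scope.
Local Open Scope ring_scope.

(* A complex-valued function u : R -> C is represented by its real part ur
   and imaginary part ui.  The modulus of a complex number (p, q) is
   sqrt(p^2 + q^2). *)
Definition cabs {R : realType} (p q : R) : R := Num.sqrt (p ^+ 2 + q ^+ 2).


Definition ravg {R : realType} (f : R -> R) (a b : R) : R :=
  (b - a)^-1 * fine (\int[lebesgue_measure]_(t in [set t : R | (a < t < b)%R]) (f t)%:E)%E.

Definition cdev {R : realType} (ur ui : R -> R) (a b t : R) : R :=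
  cabs (ur t - ravg ur a b) (ui t - ravg ui a b).

Definition mean_osc {R : realType} (ur ui : R -> R) (a b : R) : \bar R :=
  ((b - a)^-1)%:E *
  (\int[lebesgue_measure]_(t in [set t : R | (a < t < b)%R]) (cdev ur ui a b t)%:E)%E.

Definition bmo_norm {R : realType} (ur ui : R -> R) : \bar R :=
  ereal_sup [set mean_osc ur ui ab.1 ab.2 | ab in [set ab : R * R | ab.1 < ab.2]].

Definition loc_int {R : realType} (f : R -> R) : Prop :=
  forall a b : R, lebesgue_measure.-integrable [set t : R | (a < t < b)%R] (EFin \o f).

Definition in_BMO {R : realType} (ur ui : R -> R) : Prop :=
  loc_int ur /\ loc_int ui /\ (bmo_norm ur ui < +oo)%E.

Definition JN_constants {R : realType} (C0 CJN : R) : Prop :=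
  forall (ur ui : R -> R) (a b lam : R), in_BMO ur ui -> a < b -> 0 < lam ->
    (((b - a)^-1)%:E *
       lebesgue_measure [set t : R | ((a < t < b) /\ (lam <= cdev ur ui a b t))%R]
     <= (C0 * expR (- (CJN * lam / fine (bmo_norm ur ui))))%:E)%E.

(* Main.v *)
Require Import Defs.
From HB Require Import structures.
From mathcomp Require Import all_boot all_order all_algebra.
From mathcomp Require Import all_classical all_reals all_analysis.
From mathcomp Require Import ring lra measurable_realfun.
From mathcomp Require Import realfun.
Import Order.TTheory GRing.Theory Num.Theory.
Import numFieldNormedType.Exports.
Local Open Scope classical_set_scope.
Local Open Scope ring_scope.
Set Implicit Arguments. Unset Strict Implicit.

Section S.
Variable R : realType.
Implicit Types p q : R.

Lemma cabs_ge0 p q : 0 <= cabs p q.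
Proof. exact: sqrtr_ge0. Qed.

Lemma cabs_sqr p q : cabs p q ^+ 2 = p ^+ 2 + q ^+ 2.
Proof. by rewrite /cabs sqr_sqrtr // addr_ge0 // sqr_ge0. Qed.

Lemma cabs_cs p q p' q' : p * p' + q * q' <= cabs p q * cabs p' q'.
Proof.
rewrite /cabs -sqrtrM ?addr_ge0 ?sqr_ge0 //.
apply: le_trans (ler_norm _) _; rewrite -sqrtr_sqr ler_sqrt; last first.
  by rewrite mulr_ge0 // addr_ge0 // sqr_ge0.
have : 0 <= (p * q' - q * p') ^+ 2 by exact: sqr_ge0.
nra.
Qed.

Lemma cabs_tri p q p' q' : cabs (p + p') (q + q') <= cabs p q + cabs p' q'.
Proof.
have h0 := cabs_ge0 p q; have h1 := cabs_ge0 p' q'.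
rewrite -(ger0_norm (addr_ge0 h0 h1)) -sqrtr_sqr /cabs ler_sqrt ?sqr_ge0 //.
have := cabs_cs p q p' q'; have := cabs_sqr p q; have := cabs_sqr p' q'.
rewrite /cabs; nra.
Qed.

Lemma cabs_abs p q : `|p| <= cabs p q.
Proof.
rewrite -sqrtr_sqr /cabs ler_sqrt ?addr_ge0 ?sqr_ge0 //.
by rewrite lerDl sqr_ge0.
Qed.

Local Notation mu := (@lebesgue_measure R).
Local Notation LR := (measurableTypeR R).

Lemma Iab_itv (a b : R) : [set t : R | a < t < b] = `]a, b[%classic.
Proof. by apply/seteqP; split => t /=; rewrite in_itv. Qed.

Lemma mIab (a b : R) : measurable ([set t : R | a < t < b] : set LR).
Proof. by rewrite Iab_itv; have := @measurable_itv R `]a, b[. Qed.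

Lemma muIab (a b : R) : a < b -> mu [set t : R | a < t < b] = (b - a)%:E.
Proof. by move=> ab; rewrite Iab_itv lebesgue_measure_itv /= lte_fin ab -EFinD. Qed.

Lemma int_cst (a b c : R) : a < b ->
  mu.-integrable [set t : R | a < t < b] (EFin \o cst c).
Proof.
move=> ab; apply/integrableP; split; first exact/measurable_EFinP/measurable_cst.
have -> : (fun x => `|(EFin \o cst c) x|%E) = cst `|c|%:E by [].
rewrite integral_cst; last exact: mIab.
rewrite [X in (_ * X)%E](muIab ab) // -EFinM; exact: ltry.
Qed.

Lemma loc_meas (f : R -> R) a b : loc_int f -> measurable_fun ([set t : R | a < t < b] : set LR) f.
Proof. by move=> h; apply/measurable_EFinP; exact: measurable_int (h a b). Qed.

Lemma loc_measT (f : R -> R) : loc_int f -> measurable_fun (setT : set LR) f.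
Proof.
move=> h.
have -> : [set: LR] = \bigcup_n [set t : R | - (n%:R + 1) < t < n%:R + 1].
  apply/seteqP; split => // t _.
  exists (Num.truncn `|t|) => //=.
  have h1 := archimedean.Num.Theory.truncnS_gt `|t|.
  rewrite -natr1 in h1.
  by rewrite -ltr_norml.
apply/measurable_fun_bigcup => [n|n]; first exact: mIab.
exact: loc_meas.
Qed.

Lemma meas_cabs (D : set LR) (f g : R -> R) : measurable D ->
  measurable_fun D f -> measurable_fun D g ->
  measurable_fun D (fun t => cabs (f t) (g t)).
Proof.
move=> mD mf mg; rewrite /cabs.
apply: measurableT_comp; first exact: continuous_measurable_fun (@sqrt_continuous R).
by apply: measurable_funD; apply: measurable_funX.
Qed.

Lemma bmo_ge0 (ur ui : R -> R) : (0 <= bmo_norm ur ui)%E.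
Proof.
apply: le_trans (ereal_sup_ubound _); last by exists (0, 1) => //=; exact: ltr01.
rewrite /mean_osc /= mule_ge0 // ?lee_fin ?invr_ge0 ?subr_ge0 ?ler01 //.
by apply: integral_ge0 => t _; rewrite lee_fin cabs_ge0.
Qed.

Lemma mosc_le (ur ui : R -> R) a b : a < b -> (mean_osc ur ui a b <= bmo_norm ur ui)%E.
Proof. by move=> ab; apply: ereal_sup_ubound; exists (a, b). Qed.

Lemma bmo_fin (ur ui : R -> R) : in_BMO ur ui ->
  bmo_norm ur ui = (fine (bmo_norm ur ui))%:E.
Proof.
move=> [_ [_ h]]; rewrite fineK // ge0_fin_numE //; exact: bmo_ge0.
Qed.

Lemma int_cdev_le (ur ui : R -> R) a b : in_BMO ur ui -> a < b ->
  (\int[mu]_(t in [set t : R | (a < t < b)%R]) (cdev ur ui a b t)%:E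
     <= ((b - a) * fine (bmo_norm ur ui))%:E)%E.
Proof.
move=> hB ab; have := mosc_le ur ui ab; rewrite (bmo_fin hB) /mean_osc.
set X := (\int[mu]_(t in _) _)%E => h.
have ba : 0 < b - a by rewrite subr_gt0.
have -> : X = ((b - a)%:E * (((b - a)^-1)%:E * X))%E.
  by rewrite muleA -EFinM divff ?gt_eqF // mul1e.
by rewrite EFinM lee_pmul2l ?lte_fin.
Qed.

Lemma int_avg (f : R -> R) a b : loc_int f -> a < b ->
  (\int[mu]_(t in [set t : R | (a < t < b)%R]) (f t)%:E = ((b - a) * ravg f a b)%:E)%E.
Proof.
move=> hf ab; rewrite /ravg mulrA divff ?mul1r ?subr_eq0 ?gt_eqF //.
by rewrite fineK //; apply: integrable_fin_num; [exact: mIab | exact: (hf a b)].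
Qed.

Lemma loc_intD (f g : R -> R) : loc_int f -> loc_int g -> loc_int (fun t => f t + g t).
Proof.
move=> hf hg a b; have := integrableD (mIab a b) (hf a b) (hg a b).
apply: eq_integrable; [exact: mIab | by move=> t _].
Qed.

Lemma loc_intZ (k : R) (f : R -> R) : loc_int f -> loc_int (fun t => k * f t).
Proof.
move=> hf a b; have := integrableZl (mIab a b) k (hf a b).
apply: eq_integrable; [exact: mIab | by move=> t _].
Qed.

Lemma loc_int_cst (c : R) : loc_int (fun _ => c).
Proof.
move=> a b; have [ab|ba] := ltP a b; first exact: int_cst.
have -> : [set t : R | (a < t < b)%R] = set0.
  by apply/seteqP; split => // t /= /andP[h1 h2]; have := lt_trans h1 h2; rewrite ltNge ba.
exact: integrable_set0.
Qed.

Lemma loc_int_le (f g : R -> R) : loc_int f -> measurable_fun (setT : set LR) g ->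
  (forall t, `|g t| <= `|f t|) -> loc_int g.
Proof.
move=> hf mg h a b; apply: (le_integrable (mIab a b) _ _ (hf a b)).
  by apply/measurable_EFinP; exact: measurable_funS mg.
by move=> t _ /=; rewrite lee_fin h.
Qed.

Lemma cabs_le_sum p q : cabs p q <= `|p| + `|q|.
Proof.
have := cabs_tri p 0 0 q; rewrite addr0 add0r.
have e1 : cabs p 0 = `|p| by rewrite /cabs expr0n /= addr0 sqrtr_sqr.
have e2 : cabs 0 q = `|q| by rewrite /cabs expr0n /= add0r sqrtr_sqr.
by rewrite e1 e2.
Qed.

Lemma loc_int_cdev (ur ui : R -> R) a b : loc_int ur -> loc_int ui -> loc_int (cdev ur ui a b).
Proof.
move=> hr hi.
pose f := fun t => `|ur t - ravg ur a b| + `|ui t - ravg ui a b|.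
have hf : loc_int f.
  apply: loc_intD.
    apply: (loc_int_le (f := fun t => ur t + (- 1) * ravg ur a b)).
    - by apply: loc_intD => //; exact: loc_int_cst.
    - by apply: measurableT_comp => //; apply: measurable_funB; [apply: loc_measT|exact: measurable_cst].
    - by move=> t; rewrite normr_id mulN1r.
  apply: (loc_int_le (f := fun t => ui t + (- 1) * ravg ui a b)).
  - by apply: loc_intD => //; exact: loc_int_cst.
  - by apply: measurableT_comp => //; apply: measurable_funB; [apply: loc_measT|exact: measurable_cst].
  - by move=> t; rewrite normr_id mulN1r.
apply: (loc_int_le hf).
  apply: meas_cabs => //; apply: measurable_funB => //; apply: loc_measT => //.
move=> t; rewrite ger0_norm ?cabs_ge0 // ger0_norm ?addr_ge0 //; exact: cabs_le_sum.
Qed.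

Lemma intD (f g : R -> R) a b : loc_int f -> loc_int g ->
  (\int[mu]_(t in [set t : R | (a < t < b)%R]) (f t + g t)%:E =
   \int[mu]_(t in [set t : R | (a < t < b)%R]) (f t)%:E +
   \int[mu]_(t in [set t : R | (a < t < b)%R]) (g t)%:E)%E.
Proof.
move=> hf hg; rewrite -(integralD_EFin (mIab a b) (hf a b) (hg a b)).
by apply: eq_integral => t _.
Qed.

Lemma intZ (k : R) (f : R -> R) a b : loc_int f ->
  (\int[mu]_(t in [set t : R | (a < t < b)%R]) (k * f t)%:E =
   k%:E * \int[mu]_(t in [set t : R | (a < t < b)%R]) (f t)%:E)%E.
Proof.
move=> hf; rewrite -(integralZl (mIab a b) (hf a b)).
by apply: eq_integral => t _.
Qed.

Lemma intC (c : R) a b : a < b ->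
  (\int[mu]_(t in [set t : R | (a < t < b)%R]) c%:E = (c * (b - a))%:E)%E.
Proof.
move=> ab; rewrite -[X in (X = _)%E]/(\int[mu]_(t in [set t : R | (a < t < b)%R]) (cst c%:E) t)%E.
rewrite integral_cst; last exact: mIab.
by rewrite [X in (_ * X)%E](muIab ab) -EFinM.
Qed.

Lemma intle (f g : R -> R) a b : loc_int f -> loc_int g -> (forall t, f t <= g t) ->
  (\int[mu]_(t in [set t : R | (a < t < b)%R]) (f t)%:E <=
   \int[mu]_(t in [set t : R | (a < t < b)%R]) (g t)%:E)%E.
Proof.
move=> hf hg h; apply: (le_integral (mIab a b) (hf a b) (hg a b)).
by move=> t _; rewrite lee_fin.
Qed.

Lemma avg_diff (ur ui : R -> R) a b a' b' : loc_int ur -> loc_int ui ->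
  a <= a' -> a' < b' -> b' <= b ->
  (((b' - a') * cabs (ravg ur a' b' - ravg ur a b) (ravg ui a' b' - ravg ui a b))%:E
   <= \int[mu]_(t in [set t : R | (a < t < b)%R]) (cdev ur ui a b t)%:E)%E.
Proof.
move=> hr hi aa' ab' bb.
set c := ravg ur a b; set c' := ravg ui a b.
set A := ravg ur a' b' - c; set B := ravg ui a' b' - c'.
set N := cabs A B; set L := b' - a'.
have L0 : 0 < L by rewrite subr_gt0.
pose h := fun t => A * ur t + (B * ui t + (- (A * c + B * c'))).
have hh : loc_int h.
  apply: loc_intD; first exact: loc_intZ.
  by apply: loc_intD; [exact: loc_intZ | exact: loc_int_cst].
have key : (\int[mu]_(t in [set t : R | (a' < t < b')%R]) (h t)%:E
            = (L * (A * A + B * B))%:E)%E.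
  rewrite /h intD; last 2 first.
  - exact: loc_intZ.
  - by apply: loc_intD; [exact: loc_intZ | exact: loc_int_cst].
  rewrite intD; last 2 first.
  - exact: loc_intZ.
  - exact: loc_int_cst.
  rewrite !intZ // intC // !int_avg // -!EFinM -!EFinD; congr EFin.
  rewrite /A /B /L; ring.
have hcd := loc_int_cdev a b hr hi.
have hle : (\int[mu]_(t in [set t : R | (a' < t < b')%R]) (h t)%:E <=
   \int[mu]_(t in [set t : R | (a' < t < b')%R]) (N * cdev ur ui a b t)%:E)%E.
  apply: intle => //; first exact: loc_intZ.
  move=> t; have := cabs_cs A B (ur t - c) (ui t - c').
  suff -> : h t = A * (ur t - c) + B * (ui t - c') by [].
  rewrite /h; ring.
rewrite key intZ // in hle.
have hsub : (\int[mu]_(t in [set t : R | (a' < t < b')%R]) (cdev ur ui a b t)%:E <=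
   \int[mu]_(t in [set t : R | (a < t < b)%R]) (cdev ur ui a b t)%:E)%E.
  apply: ge0_subset_integral; [exact: mIab | exact: mIab | | | ].
  - exact: measurable_int (hcd a b).
  - by move=> t _; rewrite lee_fin cabs_ge0.
  - move=> t /= /andP[h1 h2]; apply/andP; split.
    + exact: le_lt_trans h1.
    + exact: lt_le_trans bb.
apply: le_trans hsub.
have [N0|Npos] := eqVneq N 0.
  by rewrite N0 mulr0; apply: integral_ge0 => t _; rewrite lee_fin cabs_ge0.
have Ng : 0 < N by rewrite lt_neqAle eq_sym Npos cabs_ge0.
move: hle.
have /fineK <- : (\int[mu]_(t in [set t : R | (a' < t < b')%R]) (cdev ur ui a b t)%:E)%E
   \is a fin_num by apply: integrable_fin_num; [exact: mIab | exact: (hcd a' b')].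
set y := fine _.
rewrite -EFinM !lee_fin.
have e : A * A + B * B = N ^+ 2 by rewrite cabs_sqr !expr2.
rewrite e => hy.
rewrite -(ler_pM2l Ng); apply: le_trans hy; rewrite expr2 le_eqVlt; apply/orP; left; apply/eqP; ring.
Qed.

Lemma geo_le (a z : R) : 0 <= a -> 0 < z -> z < 1 ->
  (\sum_(n <oo) (a * z ^+ n)%:E <= (a * (1 - z)^-1)%:E)%E.
Proof.
move=> a0 z0 z1; apply: lime_le.
  by apply: is_cvg_nneseries => n _ _; rewrite lee_fin mulr_ge0 // exprn_ge0 // ltW.
apply: nearW => n /=; rewrite sumEFin lee_fin.
have := @geometric_le_lim R n a z a0 z0; rewrite ger0_norm ?(ltW z0) // => /(_ z1).
by [].
Qed.

Lemma cabsN p q : cabs (- p) (- q) = cabs p q.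
Proof. by rewrite /cabs !sqrrN. Qed.

Lemma measS (f : R -> R) (c : R) : measurable_fun (setT : set LR) f ->
  measurable ([set t | c <= f t] : set LR).
Proof.
move=> mf; have := mf measurableT _ (measurable_itv `[c, +oo[); rewrite setTI.
suff -> : (f @^-1` `[c, +oo[%classic) = [set t | c <= f t] by [].
by apply/seteqP; split => t /=; rewrite in_itv /= andbT.
Qed.


Definition rr (CJN m : R) : R := if 0 < m then expR (- (CJN / m)) else expR (-2).
Definition KK (C0 : R) : R := Num.max C0 1.
Definition AA (C0 CJN m : R) : R := expR 1 * KK C0 / (1 - expR 1 * rr CJN m).

Lemma rr_gt0 CJN m : 0 < rr CJN m.
Proof. by rewrite /rr; case: ifP => _; exact: expR_gt0. Qed.

Lemma err_lt1 CJN m : 0 <= m -> m < CJN -> expR 1 * rr CJN m < 1.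
Proof.
move=> m0 mC; rewrite /rr; case: ifPn => hm; rewrite -expRD expR_lt1.
  by rewrite subr_lt0 ltr_pdivlMr // mul1r.
lra.
Qed.

Lemma KK_ge1 C0 : 1 <= KK C0. Proof. by rewrite /KK le_max lexx orbT. Qed.
Lemma KK_geC C0 : C0 <= KK C0. Proof. by rewrite /KK le_max lexx. Qed.

Lemma nneseries_ge_term (u : nat -> \bar R) N : (forall n, (0 <= u n)%E) ->
  (u N <= \sum_(n <oo) u n)%E.
Proof.
move=> u0; apply: le_trans (nneseries_lim_ge N.+1 _); last by move=> *; exact: u0.
rewrite big_nat_recr //=; apply: leeDr; exact: sume_ge0.
Qed.


Lemma meas_cdev (ur ui : R -> R) a b : loc_int ur -> loc_int ui ->
  measurable_fun (setT : set LR) (cdev ur ui a b).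
Proof.
move=> hr hi; apply: meas_cabs => //; apply: measurable_funB => //; exact: loc_measT.
Qed.

Lemma mu_S_le C0 CJN (ur ui : R -> R) a b n : 0 < C0 -> JN_constants C0 CJN ->
  in_BMO ur ui -> a < b ->
  (mu ([set t : R | (n%:R <= cdev ur ui a b t)%R] `&` [set t : R | (a < t < b)%R])
    <= ((b - a) * KK C0 * rr CJN (fine (bmo_norm ur ui)) ^+ n)%:E)%E.
Proof.
move=> C0p JN hB ab; have [hr [hi _]] := hB.
set m := fine (bmo_norm ur ui).
have m0 : 0 <= m by apply: fine_ge0; exact: bmo_ge0.
have ba : 0 < b - a by rewrite subr_gt0.
have mS : measurable ([set t : R | (n%:R <= cdev ur ui a b t)%R] : set LR).
  by apply: measS; exact: meas_cdev.
case: n mS => [|n] mS.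
  rewrite expr0 mulr1; apply: le_trans (measureIr (@lebesgue_measure R) mS (mIab a b)) _.
  rewrite -[X in (X <= _)%E]/(mu [set t : R | (a < t < b)%R]) muIab //.
  by rewrite lee_fin; apply: ler_peMr; [exact: ltW | exact: KK_ge1].
have [mpos|mnpos] := ltP 0 m.
  have := JN ur ui a b n.+1%:R hB ab (ltr0Sn _ _).
  rewrite setIC.
  set X := lebesgue_measure _ => h.
  have X0 : (0 <= X)%E by exact: measure_ge0.
  have -> : X = ((b - a)%:E * (((b - a)^-1)%:E * X))%E.
    by rewrite muleA -EFinM divff ?gt_eqF // mul1e.
  rewrite -mulrA EFinM lee_pmul2l ?lte_fin //; apply: le_trans h _.
  rewrite lee_fin /rr mpos -expRM_natl -/m.
  have -> : n.+1%:R * - (CJN / m) = - (CJN * n.+1%:R / m) by ring.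
  apply: ler_wpM2r; first exact: ltW (expR_gt0 _).
  exact: KK_geC.
have m00 : m = 0 by apply/eqP; rewrite eq_le mnpos m0.
set S := [set t : R | _] in mS *.
have H1 : (mu (S `&` [set t : R | (a < t < b)%R]) <=
    \int[mu]_(t in [set t : R | (a < t < b)%R]) (\1_S t)%:E)%E.
  rewrite integral_indic //; exact: mIab.
have H2 : (\int[mu]_(t in [set t : R | (a < t < b)%R]) (\1_S t)%:E <=
    \int[mu]_(t in [set t : R | (a < t < b)%R]) (cdev ur ui a b t)%:E)%E.
  apply: ge0_le_integral; [exact: mIab | | | | ].
  - by move=> t _; rewrite lee_fin indicE ler0n.
  - apply/measurable_EFinP; apply: (measurable_funS measurableT) => //; exact: measurable_indic.
  - apply/measurable_EFinP; apply: (measurable_funS measurableT) => //; exact: meas_cdev.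
  - move=> t _; rewrite lee_fin indicE; case: (boolP (t \in _)) => [/set_mem /= h|_].
      by apply: le_trans h; rewrite ler1n.
    exact: cabs_ge0.
have H3 := int_cdev_le hB ab; rewrite -/m m00 mulr0 in H3.
apply: le_trans H1 _; apply: le_trans H2 _; apply: le_trans H3 _.
rewrite lee_fin; apply: mulr_ge0; last by apply: exprn_ge0; exact: ltW (rr_gt0 _ _).
apply: mulr_ge0; [exact: ltW | exact: le_trans ler01 (KK_ge1 _)].
Qed.


Lemma exp_int C0 CJN (ur ui : R -> R) a b : 0 < C0 -> JN_constants C0 CJN ->
  in_BMO ur ui -> fine (bmo_norm ur ui) < CJN -> a < b ->
  (\int[mu]_(t in [set t : R | (a < t < b)%R]) (expR (cdev ur ui a b t))%:E
    <= ((b - a) * AA C0 CJN (fine (bmo_norm ur ui)))%:E)%E.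
Proof.
move=> C0p JN hB mC ab; have [hr [hi _]] := hB.
set m := fine (bmo_norm ur ui).
have m0 : 0 <= m by apply: fine_ge0; exact: bmo_ge0.
have ba : 0 < b - a by rewrite subr_gt0.
have mf := meas_cdev a b hr hi.
set f := cdev ur ui a b in mf *.
pose S n := [set t : R | (n%:R <= f t)%R].
have mS n : measurable (S n : set LR) by exact: measS.
pose g : nat -> R -> \bar R := fun n t => ((expR 1 * expR 1 ^+ n) * \1_(S n) t)%:E.
have g0 n t : (0 <= g n t)%E.
  by rewrite lee_fin mulr_ge0 // ?mulr_ge0 ?exprn_ge0 ?ltW ?expR_gt0 // indicE ler0n.
have mg n : measurable_fun ([set t : R | (a < t < b)%R] : set LR) (g n).
  apply/measurable_EFinP; apply: measurable_funM; first exact: measurable_cst.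
  apply: (measurable_funS measurableT) => //; exact: measurable_indic.
have step1 : (\int[mu]_(t in [set t : R | (a < t < b)%R]) (expR (f t))%:E <=
    \int[mu]_(t in [set t : R | (a < t < b)%R]) (\sum_(n <oo) g n t))%E.
  apply: ge0_le_integral; [exact: mIab | | | | ].
  - by move=> t _; rewrite lee_fin ltW ?expR_gt0.
  - apply/measurable_EFinP; apply: measurableT_comp => //.
    by apply: (measurable_funS measurableT) => //.
  - apply: ge0_emeasurable_sum => // k t _ _.
  move=> t _.
  have f0 : 0 <= f t by exact: cabs_ge0.
  apply: le_trans (nneseries_ge_term (Num.truncn (f t)) (fun n => g0 n t)).
  rewrite /g indicE mem_set; last by rewrite /S /= archimedean.Num.Theory.truncn_le.
  rewrite mulr1 lee_fin -expRM_natl mulr1 -expRD ler_expR addrC.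
  by rewrite natr1 ltW // archimedean.Num.Theory.truncnS_gt.
rewrite integral_nneseries // in step1; last exact: mIab.
apply: le_trans step1 _.
set a0 := (b - a) * KK C0 * expR 1.
set z := expR 1 * rr CJN m.
have z0 : 0 < z by rewrite mulr_gt0 ?expR_gt0 ?rr_gt0.
have z1 : z < 1 by exact: err_lt1.
apply: (@le_trans _ _ (\sum_(n <oo) (a0 * z ^+ n)%:E)%E); last first.
  have a00 : 0 <= a0.
    apply: mulr_ge0; last exact: ltW (expR_gt0 _).
    apply: mulr_ge0; [exact: ltW | exact: le_trans ler01 (KK_ge1 _)].
  apply: le_trans (geo_le a00 z0 z1) _.
  by rewrite lee_fin /a0 /z /AA le_eqVlt; apply/orP; left; apply/eqP; ring.
apply: lee_nneseries => [n _ _|n _]; first by apply: integral_ge0 => t _; exact: g0.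
rewrite /g.
under eq_integral do rewrite EFinM.
rewrite ge0_integralZl_EFin //; last 2 first.
- exact: mIab.
- apply/measurable_EFinP; apply: (measurable_funS measurableT) => //; exact: measurable_indic.
rewrite integral_indic //; last exact: mIab.
apply: le_trans (lee_wpmul2l _ (mu_S_le n C0p JN hB ab)) _.
  by rewrite lee_fin mulr_ge0 ?exprn_ge0 ?ltW ?expR_gt0.
rewrite -EFinM lee_fin /a0 /z exprMn le_eqVlt; apply/orP; left; apply/eqP; ring.
Qed.

End S.

Section S2. Variable R : realType. Local Notation mu := (@lebesgue_measure R). Local Notation LR := (measurableTypeR R). Implicit Types p q : R.

Lemma measLR_id : measurable_fun (setT : set LR) (fun t : LR => (t : R)).
Proof. by move=> _ B mB; rewrite setTI. Qed.

Lemma cabs00 : cabs 0 0 = 0 :> R.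
Proof. by rewrite /cabs expr0n /= addr0 sqrtr0. Qed.

Lemma step2 (ur ui : R -> R) (x p : R) : in_BMO ur ui -> 0 < p ->
  cabs (ravg ur (x - 2 * p) (x + 2 * p) - ravg ur (x - p) (x + p))
       (ravg ui (x - 2 * p) (x + 2 * p) - ravg ui (x - p) (x + p))
  <= 2 * fine (bmo_norm ur ui).
Proof.
move=> hB p0; have [hr [hi _]] := hB.
have h1 : x - 2 * p <= x - p by lra.
have h2 : x - p < x + p by lra.
have h3 : x + p <= x + 2 * p by lra.
have h4 : x - 2 * p < x + 2 * p by lra.
have hd := avg_diff hr hi h1 h2 h3.
have h5 := le_trans hd (int_cdev_le hB h4).
rewrite lee_fin in h5.
rewrite -cabsN !opprB.
have e1 : x + p - (x - p) = 2 * p by ring.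
have e2 : x + 2 * p - (x - 2 * p) = 2 * (2 * p) by ring.
rewrite e1 e2 in h5.
rewrite -(ler_pM2l (_ : 0 < 2 * p)); last by rewrite mulr_gt0.
by apply: le_trans h5 _; rewrite le_eqVlt; apply/orP; left; apply/eqP; ring.
Qed.

Lemma chain (ur ui : R -> R) (x y : R) k : in_BMO ur ui -> 0 < y ->
  cabs (ravg ur (x - 2 ^+ k * y) (x + 2 ^+ k * y) - ravg ur (x - y) (x + y))
       (ravg ui (x - 2 ^+ k * y) (x + 2 ^+ k * y) - ravg ui (x - y) (x + y))
  <= 2 * fine (bmo_norm ur ui) * k%:R.
Proof.
move=> hB y0.
elim: k => [|k IH].
  by rewrite expr0 mul1r !subrr cabs00 mulr0.
have p0 : 0 < 2 ^+ k * y :> R by rewrite mulr_gt0 // exprn_gt0.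
have h4 := step2 x hB p0.
rewrite exprS -mulrA.
move: IH h4.
set A1 := ravg ur (x - 2 * (2 ^+ k * y)) (x + 2 * (2 ^+ k * y)).
set B1 := ravg ui (x - 2 * (2 ^+ k * y)) (x + 2 * (2 ^+ k * y)).
set A0 := ravg ur (x - 2 ^+ k * y) (x + 2 ^+ k * y).
set B0 := ravg ui (x - 2 ^+ k * y) (x + 2 ^+ k * y).
set I0 := ravg ur (x - y) (x + y); set J0 := ravg ui (x - y) (x + y).
move=> IH h4.
have e : A1 - I0 = (A1 - A0) + (A0 - I0) by ring.
have e' : B1 - J0 = (B1 - B0) + (B0 - J0) by ring.
rewrite e e'; apply: le_trans (cabs_tri _ _ _ _) _.
rewrite -natr1; have h5 := lerD h4 IH; apply: le_trans h5 _.
by rewrite le_eqVlt; apply/orP; left; apply/eqP; ring.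
Qed.

End S2.

Section S3. Variable R : realType. Local Notation mu := (@lebesgue_measure R). Local Notation LR := (measurableTypeR R). Implicit Types p q : R.

Definition JJ (m : R) : nat := (Num.truncn (4 * expR (2 * m))).+1.
Definition ZZ (m : R) : R := 2 * expR (2 * m) / 2 ^+ JJ m.
Definition MM (m : R) : R := expR 1 * (JJ m)`!%:R * 2 ^+ JJ m.

Lemma JJ_gt (m : R) : 4 * expR (2 * m) < (JJ m)%:R.
Proof. exact: archimedean.Num.Theory.truncnS_gt. Qed.

Lemma pow2_gt (n : nat) : (n%:R : R) < 2 ^+ n.
Proof. by rewrite -natrX ltr_nat ltn_expl. Qed.

Lemma ZZ_gt0 m : 0 < ZZ m.
Proof. by rewrite /ZZ mulr_gt0 ?invr_gt0 ?exprn_gt0 ?mulr_gt0 ?expR_gt0. Qed.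

Lemma ZZ_lt1 m : ZZ m < 1.
Proof.
rewrite /ZZ ltr_pdivrMr ?exprn_gt0 // mul1r.
have := JJ_gt m; have := pow2_gt (JJ m); have := expR_gt0 (2 * m). lra.
Qed.

Lemma MM_ge0 m : 0 <= MM m.
Proof. by rewrite /MM !mulr_ge0 ?exprn_ge0 ?ltW ?expR_gt0. Qed.

Lemma decay (m : R) (k : nat) :
  2 ^+ k * expR (1 - 2 ^+ k / 2) * expR (2 * m * k%:R) <= MM m * ZZ m ^+ k.
Proof.
set J := JJ m; set P : R := 2 ^+ k; set s := P / 2.
have P0 : 0 < P by rewrite exprn_gt0.
have s0 : 0 < s by rewrite divr_gt0.
have hs : s ^+ J / J`!%:R <= expR s.
  apply: le_trans (expR_ge1Dxn (Num.truncn (4 * expR (2 * m))) (ltW s0)).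
  rewrite /J /JJ; set u := (s ^+ _ / _); lra.
have hs0 : 0 < s ^+ J / J`!%:R by rewrite divr_gt0 ?exprn_gt0 // ltr0n fact_gt0.
have key : (expR s)^-1 <= J`!%:R * 2 ^+ J / P ^+ J.
  have := hs; rewrite -lef_pV2 ?posrE ?expR_gt0 //.
  move=> h; apply: le_trans h _; rewrite le_eqVlt; apply/orP; left; apply/eqP.
  rewrite /s expr_div_n invfM invrK; field.
  rewrite !expf_neq0 ?pnatr_eq0 ?gt_eqF ?fact_gt0 //.
rewrite expRD expRN expRM_natr /MM /ZZ -/J.
rewrite expr_div_n exprMn -exprAC -/P.
set G := expR (2 * m) ^+ k.
have G0 : 0 < G by rewrite exprn_gt0 ?expR_gt0.
have -> : P * (expR 1 * (expR s)^-1) * G = (P * expR 1 * G) * (expR s)^-1 by ring.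
apply: le_trans (ler_wpM2l _ key) _.
  by rewrite !mulr_ge0 ?ltW ?expR_gt0.
rewrite le_eqVlt; apply/orP; left; apply/eqP; field.
by rewrite expf_neq0 ?gt_eqF.
Qed.

End S3.

Unset Implicit Arguments.
Set Strict Implicit.

Theorem proposition2p5 (R : realType) (C0 CJN : R) :
  0 < C0 -> 0 < CJN -> JN_constants C0 CJN ->
  exists F : R -> R -> R,
    forall (ur ui phr phi : R -> R) (C : R),
      in_BMO ur ui ->
      0 < C ->
      measurable_fun setT phr -> measurable_fun setT phi ->
      (forall x : R, cabs (phr x) (phi x) <= C * expR (- `|x|)) ->
      (bmo_norm ur ui < CJN%:E)%E ->
      forall x y : R, 0 < y ->
        (\int[lebesgue_measure]_(t in [set: R])
            ((y^-1 * cabs (phr ((x - t) / y)) (phi ((x - t) / y)))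
             * expR (cdev ur ui (x - y) (x + y) t))%:E
         <= (F (fine (bmo_norm ur ui)) C)%:E)%E.
Proof.
move=> C0p CJNp JN.
exists (fun m C => C * AA C0 CJN m * 2 * MM m / (1 - ZZ m)).
move=> ur ui phr phi C hB Cp mphr mphi hphi hlt x y y0.
have [hr [hi _]] := hB.
set m := fine (bmo_norm ur ui).
have m0 : 0 <= m by apply: fine_ge0; exact: bmo_ge0.
have mC : m < CJN by move: hlt; rewrite (bmo_fin hB) lte_fin.
pose ak (k : nat) := x - 2 ^+ k * y.
pose bk (k : nat) := x + 2 ^+ k * y.
pose ck (k : nat) := y^-1 * C * expR (1 - 2 ^+ k / 2) * expR (2 * m * k%:R).
have ck0 k : 0 <= ck k by rewrite /ck !mulr_ge0 ?invr_ge0 ?ltW ?expR_gt0.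
pose g : nat -> R -> \bar R := fun k =>
  (fun t => (ck k * expR (cdev ur ui (ak k) (bk k) t))%:E)
    \_ ([set t : R | (ak k < t < bk k)%R]).
have g0 k t : (0 <= g k t)%E.
  rewrite /g patchE; case: ifP => _; last exact: lexx.
  by rewrite lee_fin; apply: mulr_ge0; [exact: ck0 | exact: ltW (expR_gt0 _)].
have mg k : measurable_fun (setT : set (measurableTypeR R)) (g k).
  apply/(measurable_restrictT _ _).1; first exact: mIab.
  apply/measurable_EFinP; apply: measurable_funM; first exact: measurable_cst.
  apply: measurableT_comp => //; apply: (measurable_funS measurableT) => //.
  exact: meas_cdev.
have AA0 : 0 <= AA C0 CJN m.
  rewrite /AA; apply: divr_ge0.
    apply: mulr_ge0; [exact: ltW (expR_gt0 _) | exact: le_trans ler01 (KK_ge1 _)].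
  by rewrite subr_ge0 ltW // err_lt1.
have mh : measurable_fun (setT : set (measurableTypeR R)) (fun t : measurableTypeR R => (x - t) / y).
  apply: measurable_funM; last exact: measurable_cst.
  apply: measurable_funB; [exact: measurable_cst | exact: measLR_id].
have mI : measurable_fun (setT : set (measurableTypeR R)) (fun t =>
   ((y^-1 * cabs (phr ((x - t) / y)) (phi ((x - t) / y)))
     * expR (cdev ur ui (x - y) (x + y) t))%:E).
  apply/measurable_EFinP; apply: measurable_funM.
    apply: measurable_funM; first exact: measurable_cst.
    apply: meas_cabs => //; [exact: measurableT_comp mphr mh | exact: measurableT_comp mphi mh].
  apply: measurableT_comp => //; exact: meas_cdev.
have step1 : (\int[lebesgue_measure]_(t in [set: R])
            ((y^-1 * cabs (phr ((x - t) / y)) (phi ((x - t) / y)))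
             * expR (cdev ur ui (x - y) (x + y) t))%:E <=
     \int[lebesgue_measure]_(t in [set: R]) (\sum_(k <oo) g k t))%E.
  apply: ge0_le_integral => //.
  - move=> t _; rewrite lee_fin; apply: mulr_ge0; last exact: ltW (expR_gt0 _).
    by apply: mulr_ge0; [rewrite invr_ge0 ltW | exact: cabs_ge0].
  - by apply: ge0_emeasurable_sum => // k t _ _.
  move=> t _.
  set d : R := `|x - t|.
  have hex : exists k, (d < 2 ^+ k * y)%R.
    exists (Num.truncn (d / y)).+1.
    rewrite -ltr_pdivrMr //.
    have h1 := archimedean.Num.Theory.truncnS_gt (d / y).
    have h2 := @pow2_gt R (Num.truncn (d / y)).+1.
    exact: lt_trans h1 h2.
  case: (ex_minnP hex) => k Pk kmin.
  apply: le_trans (nneseries_ge_term k (fun n => g0 n t)).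
  have tin : (ak k < t < bk k)%R.
    move: Pk; rewrite /d ltr_norml /ak /bk => /andP[h1 h2].
    set p := 2 ^+ k * y in h1 h2 *; apply/andP; split; lra.
  rewrite /g patchE mem_set //= lee_fin.
  have hK : cabs (phr ((x - t) / y)) (phi ((x - t) / y)) <= C * expR (1 - 2 ^+ k / 2).
    apply: le_trans (hphi _) _; rewrite ler_pM2l // ler_expR.
    case: k Pk kmin tin => [|k] Pk kmin tin.
      by rewrite expr0; have := normr_ge0 ((x - t) / y); lra.
    have nP : ~~ (d < 2 ^+ k * y).
      by apply/negP => /kmin; rewrite ltnn.
    rewrite -leNgt in nP.
    have e1 : `|(x - t) / y| = d / y by rewrite normrM normfV (gtr0_norm y0).
    have e2 : 2 ^+ k.+1 / 2 = 2 ^+ k :> R by rewrite exprS mulrC mulrA mulVf ?mul1r.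
    rewrite e1 e2.
    have : 2 ^+ k <= d / y by rewrite ler_pdivlMr.
    lra.
  have hD : cdev ur ui (x - y) (x + y) t <= cdev ur ui (ak k) (bk k) t + 2 * m * k%:R.
    have hc := chain x k hB y0; rewrite -/m in hc.
    have hc2 := lerD (lexx (cdev ur ui (ak k) (bk k) t)) hc.
    apply: le_trans hc2; rewrite /cdev /ak /bk.
    set A := ravg ur (x - 2 ^+ k * y) (x + 2 ^+ k * y).
    set B := ravg ui (x - 2 ^+ k * y) (x + 2 ^+ k * y).
    set I0 := ravg ur (x - y) (x + y); set J0 := ravg ui (x - y) (x + y).
    have e1 : ur t - I0 = (ur t - A) + (A - I0) by ring.
    have e2 : ui t - J0 = (ui t - B) + (B - J0) by ring.
    rewrite e1 e2; exact: cabs_tri.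
  have -> : ck k * expR (cdev ur ui (ak k) (bk k) t) =
      (y^-1 * (C * expR (1 - 2 ^+ k / 2))) *
      (expR (cdev ur ui (ak k) (bk k) t) * expR (2 * m * k%:R)).
    by rewrite /ck; ring.
  apply: ler_pM.
  - by apply: mulr_ge0; [rewrite invr_ge0 ltW | exact: cabs_ge0].
  - exact: ltW (expR_gt0 _).
  - by rewrite ler_wpM2l // invr_ge0 ltW.
  - by rewrite -expRD ler_expR.
rewrite integral_nneseries // in step1.
apply: le_trans step1 _.
set z := ZZ m.
set a0 := C * AA C0 CJN m * 2 * MM m.
have a00 : 0 <= a0.
  rewrite /a0; apply: mulr_ge0; last exact: MM_ge0.
  by apply: mulr_ge0 => //; apply: mulr_ge0 => //; exact: ltW.
apply: (@le_trans _ _ (\sum_(k <oo) (a0 * z ^+ k)%:E)%E); last first.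
  exact: le_trans (geo_le a00 (ZZ_gt0 m) (ZZ_lt1 m)) _.
apply: lee_nneseries => [k _ _|k _]; first by apply: integral_ge0 => t _; exact: g0.
rewrite /g -integral_mkcond.
under eq_integral do rewrite EFinM.
have abk : ak k < bk k.
  rewrite /ak /bk; have : 0 < 2 ^+ k * y :> R by rewrite mulr_gt0 // exprn_gt0.
  set p := 2 ^+ k * y; lra.
rewrite ge0_integralZl_EFin //; last 2 first.
- exact: mIab.
- apply/measurable_EFinP; apply: measurableT_comp => //.
  apply: (measurable_funS measurableT) => //; exact: meas_cdev.
apply: le_trans (lee_wpmul2l _ (exp_int C0p JN hB mC abk)) _.
  by rewrite lee_fin.
rewrite -EFinM lee_fin.
have -> : ck k * ((bk k - ak k) * AA C0 CJN m) =
    (C * AA C0 CJN m * 2) * (2 ^+ k * expR (1 - 2 ^+ k / 2) * expR (2 * m * k%:R)).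
  by rewrite /ck /ak /bk; field; rewrite gt_eqF.
apply: le_trans (ler_wpM2l _ (decay m k)) _.
  by apply: mulr_ge0 => //; apply: mulr_ge0 => //; exact: ltW.
by rewrite /a0 /z !mulrA.
Qed.
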